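(* Let $\mathscr{B}$ be a $\mathscr{V}$-category with $\mathscr{V}$-kernel-pairs. Then (1) $\mathsf{StrMono}_\mathscr{V}\mathscr{B}=(\mathsf{Epi}_\mathscr{V}\mathscr{B})^{\downarrow_\mathscr{V}}$; (2) if $\mathscr{B}$ also has $\mathscr{V}$-cokernel-pairs, then $\mathsf{Epi}_\mathscr{V}\mathscr{B}=(\mathsf{StrMono}_\mathscr{V}\mathscr{B})^{\uparrow_\mathscr{V}}$.
   Context: $\mathscr{V}$ is a closed symmetric monoidal category. $\mathsf{Mono}_\mathscr{V}\mathscr{B}$: morphisms $m$ with $\mathscr{B}(A,m)$ mono in $\mathscr{V}$ for all $A$; $\mathsf{Epi}_\mathscr{V}\mathscr{B}$: morphisms $e$ with $\mathscr{B}(e,C)$ mono in $\mathscr{V}$ for all $C$. $\mathscr{V}$-kernel-pairs are kernel pairs preserved by all $\mathscr{B}(A,-):\mathscr{B}\to\mathscr{V}$; $\mathscr{V}$-cokernel-pairs are $\mathscr{V}$-kernel-pairs in $\mathscr{B}^{op}$. For $e:A_1\to A_2$, $m:B_1\to B_2$, $e\downarrow_\mathscr{V} m$ means the square formed by $\mathscr{B}(A_2,m)$, $\mathscr{B}(A_1,m)$, $\mathscr{B}(e,B_1)$, $\mathscr{B}(e,B_2)$ is a pullback in $\mathscr{V}$. $\mathscr{E}^{\downarrow_\mathscr{V}}=\{m:\ e\downarrow_\mathscr{V} m\ \forall e\in\mathscr{E}\}$, $\mathscr{M}^{\uparrow_\mathscr{V}}=\{e:\ e\downarrow_\mathscr{V}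 m\ \forall m\in\mathscr{M}\}$. $\mathsf{StrMono}_\mathscr{V}\mathscr{B}:=(\mathsf{Epi}_\mathscr{V}\mathscr{B})^{\downarrow_\mathscr{V}}\cap\mathsf{Mono}_\mathscr{V}\mathscr{B}$ ($\mathscr{V}$-strong-monos). *)

(* Defs.v *)
Set Implicit Arguments.
Unset Strict Implicit.

Record Category := {
  Ob :> Type;
  Hom : Ob -> Ob -> Type;
  cmp : forall a b c, Hom b c -> Hom a b -> Hom a c;
  idn : forall a, Hom a a;
  cmp_idl : forall a b (f : Hom a b), cmp (idn b) f = f;
  cmp_idr : forall a b (f : Hom a b), cmp f (idn a) = f;
  cmp_assoc : forall a b c d (h : Hom c d) (g : Hom b c) (f : Hom a b),
      cmp h (cmp g f) = cmp (cmp h g) f }.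
Arguments Hom {C} a b : rename.
Arguments cmp {C a b c} g f : rename.
Arguments idn {C} a : rename.

Notation "g ∘ f" := (cmp g f) (at level 40, left associativity).

Definition mono {C : Category} {a b : C} (f : Hom a b) : Prop :=
  forall x (u v : Hom x a), f ∘ u = f ∘ v -> u = v.

Definition is_pullback {C : Category} {P X Y Z : C}
  (f : Hom X Z) (g : Hom Y Z) (p1 : Hom P X) (p2 : Hom P Y) : Prop :=
  f ∘ p1 = g ∘ p2 /\
  forall T (u : Hom T X) (v : Hom T Y), f ∘ u = g ∘ v ->
    exists! w : Hom T P, p1 ∘ w = u /\ p2 ∘ w = v.

Record ClosedSymMonoidal (V : Category) := {
  tns : V -> V -> V;
  tnsh : forall a b c d, Hom a b -> Hom c d -> Hom (tns a c) (tns b d);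
  tnsh_id : forall a c, tnsh (idn a) (idn c) = idn (tns a c);
  tnsh_cmp : forall a b e c d f (g1 : Hom b e) (g2 : Hom a b)
      (h1 : Hom d f) (h2 : Hom c d),
      tnsh (g1 ∘ g2) (h1 ∘ h2) = tnsh g1 h1 ∘ tnsh g2 h2;
  unt : V;
  asc : forall a b c, Hom (tns (tns a b) c) (tns a (tns b c));
  asc_inv : forall a b c, Hom (tns a (tns b c)) (tns (tns a b) c);
  asc_iso1 : forall a b c, asc_inv a b c ∘ asc a b c = idn _;
  asc_iso2 : forall a b c, asc a b c ∘ asc_inv a b c = idn _;
  asc_nat : forall a1 a2 a3 b1 b2 b3 (f : Hom a1 b1) (g : Hom a2 b2)
      (h : Hom a3 b3),
      asc b1 b2 b3 ∘ tnsh (tnsh f g) h = tnsh f (tnsh g h) ∘ asc a1 a2 a3;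
  lu : forall a, Hom (tns unt a) a;
  lu_inv : forall a, Hom a (tns unt a);
  lu_iso1 : forall a, lu_inv a ∘ lu a = idn _;
  lu_iso2 : forall a, lu a ∘ lu_inv a = idn _;
  lu_nat : forall a b (f : Hom a b), lu b ∘ tnsh (idn unt) f = f ∘ lu a;
  ru : forall a, Hom (tns a unt) a;
  ru_inv : forall a, Hom a (tns a unt);
  ru_iso1 : forall a, ru_inv a ∘ ru a = idn _;
  ru_iso2 : forall a, ru a ∘ ru_inv a = idn _;
  ru_nat : forall a b (f : Hom a b), ru b ∘ tnsh f (idn unt) = f ∘ ru a;
  pentagon : forall a b c d,
      asc a b (tns c d) ∘ asc (tns a b) c d
      = tnsh (idn a) (asc b c d) ∘ asc a (tns b c) d ∘ tnsh (asc a b c) (idn d);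
  triangle : forall a b,
      tnsh (idn a) (lu b) ∘ asc a unt b = tnsh (ru a) (idn b);
  sym : forall a b, Hom (tns a b) (tns b a);
  sym_nat : forall a1 a2 b1 b2 (f : Hom a1 b1) (g : Hom a2 b2),
      sym b1 b2 ∘ tnsh f g = tnsh g f ∘ sym a1 a2;
  sym_invol : forall a b, sym b a ∘ sym a b = idn _;
  hexagon : forall a b c,
      asc b c a ∘ sym a (tns b c) ∘ asc a b c
      = tnsh (idn b) (sym a c) ∘ asc b a c ∘ tnsh (sym a b) (idn c);
  (* closedness: each (- ⊗ b) has a right adjoint [b, -] *)
  ihom : V -> V -> V;
  ev : forall b c, Hom (tns (ihom b c) b) c;
  ev_univ : forall a b c (f : Hom (tns a b) c),
      exists! g : Hom a (ihom b c), ev b c ∘ tnsh g (idn b) = f }.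
Arguments tns {V} M a b : rename.
Arguments tnsh {V} M {a b c d} f g : rename.
Arguments unt {V} M : rename.
Arguments asc {V} M a b c : rename.
Arguments lu {V} M a : rename.
Arguments lu_inv {V} M a : rename.
Arguments ru {V} M a : rename.
Arguments ru_inv {V} M a : rename.

Record VCategory (V : Category) (M : ClosedSymMonoidal V) := {
  vob :> Type;
  vhom : vob -> vob -> V;
  vcomp : forall a b c, Hom (tns M (vhom b c) (vhom a b)) (vhom a c);
  vid : forall a, Hom (unt M) (vhom a a);
  vassoc : forall a b c d,
      vcomp a b d ∘ tnsh M (vcomp b c d) (idn (vhom a b))
      = vcomp a c d ∘ tnsh M (idn (vhom c d)) (vcomp a b c)
        ∘ asc M (vhom c d) (vhom b c) (vhom a b);
  vunitl : forall a b, vcomp a b b ∘ tnsh M (vid b) (idn (vhom a b)) = lu M (vhom a b);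
  vunitr : forall a b, vcomp a a b ∘ tnsh M (idn (vhom a b)) (vid a) = ru M (vhom a b) }.
Arguments vhom {V M} B a b : rename.
Arguments vcomp {V M} B a b c : rename.
Arguments vid {V M} B a : rename.

Section VNotions.
Context {V : Category} {M : ClosedSymMonoidal V} (B : VCategory M).

(* morphisms of the underlying ordinary category B_0 *)
Definition uhom (a b : B) : Type := Hom (unt M) (vhom B a b).

Definition ucomp {a b c : B} (g : uhom b c) (f : uhom a b) : uhom a c :=
  vcomp B a b c ∘ tnsh M g f ∘ lu_inv M (unt M).

Definition postc (A : B) {b1 b2 : B} (m : uhom b1 b2)
  : Hom (vhom B A b1) (vhom B A b2) :=
  vcomp B A b1 b2 ∘ tnsh M m (idn _) ∘ lu_inv M (vhom B A b1).

Definition prec {a1 a2 : B} (e : uhom a1 a2) (C : B)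
  : Hom (vhom B a2 C) (vhom B a1 C) :=
  vcomp B a1 a2 C ∘ tnsh M (idn _) e ∘ ru_inv M (vhom B a2 C).

Definition MorClass := forall a b : B, uhom a b -> Prop.

Definition MonoV : MorClass := fun b1 b2 m => forall A : B, mono (postc A m).
Definition EpiV : MorClass := fun c1 c2 e => forall C : B, mono (prec e C).

Definition ukernel_pair {k b1 b2 : B} (m : uhom b1 b2) (p1 p2 : uhom k b1) : Prop :=
  ucomp m p1 = ucomp m p2 /\
  forall x (u v : uhom x b1), ucomp m u = ucomp m v ->
    exists! w : uhom x k, ucomp p1 w = u /\ ucomp p2 w = v.

Definition Vkernel_pair {k b1 b2 : B} (m : uhom b1 b2) (p1 p2 : uhom k b1) : Prop :=
  ukernel_pair m p1 p2 /\
  forall A : B, is_pullback (postc A m) (postc A m) (postc A p1) (postc A p2).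

Definition has_Vkernel_pairs : Prop :=
  forall (b1 b2 : B) (m : uhom b1 b2),
    exists (k : B) (p1 p2 : uhom k b1), Vkernel_pair m p1 p2.

Definition ucokernel_pair {a1 a2 q : B} (e : uhom a1 a2) (i1 i2 : uhom a2 q) : Prop :=
  ucomp i1 e = ucomp i2 e /\
  forall x (u v : uhom a2 x), ucomp u e = ucomp v e ->
    exists! w : uhom q x, ucomp w i1 = u /\ ucomp w i2 = v.

(* V-cokernel-pair = V-kernel-pair in B^op, written out: a cokernel pair
   preserved by every B^op(C,-) = B(-,C) *)
Definition Vcokernel_pair {a1 a2 q : B} (e : uhom a1 a2) (i1 i2 : uhom a2 q) : Prop :=
  ucokernel_pair e i1 i2 /\
  forall C : B, is_pullback (prec e C) (prec e C) (prec i1 C) (prec i2 C).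

Definition has_Vcokernel_pairs : Prop :=
  forall (a1 a2 : B) (e : uhom a1 a2),
    exists (q : B) (i1 i2 : uhom a2 q), Vcokernel_pair e i1 i2.

(* e ↓_V m : the square
      B(A2,B1) --B(A2,m)--> B(A2,B2)
         |B(e,B1)               |B(e,B2)
      B(A1,B1) --B(A1,m)--> B(A1,B2)
   is a pullback in V *)
Definition orthV {a1 a2 b1 b2 : B} (e : uhom a1 a2) (m : uhom b1 b2) : Prop :=
  is_pullback (postc a1 m) (prec e b2) (prec e b1) (postc a2 m).

Definition rorth (E : MorClass) : MorClass :=
  fun b1 b2 m => forall a1 a2 (e : uhom a1 a2), E a1 a2 e -> orthV e m.
Definition lorth (Mc : MorClass) : MorClass :=
  fun a1 a2 e => forall b1 b2 (m : uhom b1 b2), Mc b1 b2 m -> orthV e m.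

Definition StrMonoV : MorClass :=
  fun b1 b2 m => @rorth EpiV b1 b2 m /\ @MonoV b1 b2 m.

End VNotions.

Arguments uhom {V M} B.
Arguments MonoV {V M} B.
Arguments EpiV {V M} B.
Arguments StrMonoV {V M} B.
Arguments rorth {V M} B.
Arguments lorth {V M} B.
Arguments has_Vkernel_pairs {V M} B.
Arguments has_Vcokernel_pairs {V M} B.

(* Main.v *)
Require Import Defs.

Section Cat.
Context {C : Category}.
Lemma liftl2 {a b c x : C} (f : Hom a b) (g : Hom b c) (r : Hom a c) (X : Hom c x) :
  g ∘ f = r -> X ∘ g ∘ f = X ∘ r.
Proof. intros H; rewrite <- cmp_assoc, H; reflexivity. Qed.
Lemma liftl3 {a b c d x : C} (f : Hom a b) (g : Hom b c) (h : Hom c d) (r : Hom a d) (X : Hom d x) :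
  h ∘ g ∘ f = r -> X ∘ h ∘ g ∘ f = X ∘ r.
Proof. intros H; rewrite <- H, !cmp_assoc; reflexivity. Qed.
Lemma liftl4 {a b c d e x : C} (f : Hom a b) (g : Hom b c) (h : Hom c d) (k : Hom d e) (r : Hom a e) (X : Hom e x) :
  k ∘ h ∘ g ∘ f = r -> X ∘ k ∘ h ∘ g ∘ f = X ∘ r.
Proof. intros H; rewrite <- H, !cmp_assoc; reflexivity. Qed.
Lemma cancel_l {a b c : C} (i : Hom b c) (j : Hom c b) (f g : Hom a b) :
  j ∘ i = idn b -> i ∘ f = i ∘ g -> f = g.
Proof. intros H E. rewrite <- (cmp_idl f), <- (cmp_idl g), <- H, <- !cmp_assoc, E; reflexivity. Qed.
Lemma cancel_r {a b c : C} (i : Hom a b) (j : Hom b a) (f g : Hom b c) :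
  i ∘ j = idn b -> f ∘ i = g ∘ i -> f = g.
Proof. intros H E. rewrite <- (cmp_idr f), <- (cmp_idr g), <- H, !cmp_assoc, E; reflexivity. Qed.
End Cat.

Ltac norm := repeat rewrite cmp_assoc.
Ltac lrw L := first [ rewrite L | rewrite (liftl4 _ _ _ _ _ _ L) | rewrite (liftl3 _ _ _ _ _ L)
  | rewrite (liftl2 _ _ _ _ L) ]; norm.

Section Mon.
Context {V : Category} (M : ClosedSymMonoidal V).
Local Notation "f ⊗ g" := (tnsh M f g) (at level 35).
Local Notation I := (unt M).

Lemma tl {a b c d : V} (f : Hom a b) (g : Hom c d) : (f ⊗ idn d) ∘ (idn a ⊗ g) = f ⊗ g.
Proof. rewrite <- tnsh_cmp, cmp_idl, cmp_idr; reflexivity. Qed.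
Lemma tr {a b c d : V} (f : Hom a b) (g : Hom c d) : (idn b ⊗ g) ∘ (f ⊗ idn c) = f ⊗ g.
Proof. rewrite <- tnsh_cmp, cmp_idl, cmp_idr; reflexivity. Qed.
Lemma tcl {a b c d : V} (f : Hom a b) (g : Hom b c) : (g ∘ f) ⊗ idn d = (g ⊗ idn d) ∘ (f ⊗ idn d).
Proof. rewrite <- tnsh_cmp, cmp_idl; reflexivity. Qed.
Lemma tcr {a b c d : V} (f : Hom a b) (g : Hom b c) : idn d ⊗ (g ∘ f) = (idn d ⊗ g) ∘ (idn d ⊗ f).
Proof. rewrite <- tnsh_cmp, cmp_idl; reflexivity. Qed.

Lemma lu_inv_nat {a b : V} (f : Hom a b) : (idn I ⊗ f) ∘ lu_inv M a = lu_inv M b ∘ f.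
Proof.
  rewrite <- (cmp_idl (_ ∘ lu_inv M a)), <- (lu_iso1 M b). norm.
  lrw (lu_nat M f). rewrite <- cmp_assoc, lu_iso2, cmp_idr. reflexivity.
Qed.
Lemma ru_inv_nat {a b : V} (f : Hom a b) : (f ⊗ idn I) ∘ ru_inv M a = ru_inv M b ∘ f.
Proof.
  rewrite <- (cmp_idl (_ ∘ ru_inv M a)), <- (ru_iso1 M b). norm.
  lrw (ru_nat M f). rewrite <- cmp_assoc, ru_iso2, cmp_idr. reflexivity.
Qed.
Lemma asc_inv_nat {a1 a2 a3 b1 b2 b3 : V} (f : Hom a1 b1) (g : Hom a2 b2) (h : Hom a3 b3) :
  asc_inv M b1 b2 b3 ∘ (f ⊗ (g ⊗ h)) = ((f ⊗ g) ⊗ h) ∘ asc_inv M a1 a2 a3.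
Proof.
  apply (cancel_l _ _ _ _ (asc_iso1 M b1 b2 b3)). norm.
  rewrite asc_iso2, cmp_idl. lrw (asc_nat M f g h).
  rewrite <- cmp_assoc, asc_iso2, cmp_idr. reflexivity.
Qed.
Lemma tid_iso_l {a b : V} (f : Hom a b) (g : Hom b a) (c : V) :
  g ∘ f = idn a -> (g ⊗ idn c) ∘ (f ⊗ idn c) = idn _.
Proof. intros H. rewrite <- tcl, H, tnsh_id. reflexivity. Qed.
Lemma tid_iso_r {a b : V} (f : Hom a b) (g : Hom b a) (c : V) :
  g ∘ f = idn a -> (idn c ⊗ g) ∘ (idn c ⊗ f) = idn _.
Proof. intros H. rewrite <- tcr, H, tnsh_id. reflexivity. Qed.

Lemma triangle_inv (a b : V) :
  asc_inv M a I b ∘ (idn a ⊗ lu_inv M b) = ru_inv M a ⊗ idn b.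
Proof.
  apply (cancel_l (ru M a ⊗ idn b) (ru_inv M a ⊗ idn b)). apply tid_iso_l, ru_iso1.
  rewrite <- tcl, ru_iso2, tnsh_id. rewrite <- triangle. norm.
  lrw (asc_iso2 M a I b). rewrite cmp_idr, <- tcr, lu_iso2, tnsh_id. reflexivity.
Qed.

Lemma cancel_tI {a b : V} (f g : Hom a b) : f ⊗ idn I = g ⊗ idn I -> f = g.
Proof.
  intros H. apply (cancel_r (ru M a) (ru_inv M a)). apply ru_iso2.
  rewrite <- !ru_nat, H. reflexivity.
Qed.
Lemma cancel_It {a b : V} (f g : Hom a b) : idn I ⊗ f = idn I ⊗ g -> f = g.
Proof.
  intros H. apply (cancel_r (lu M a) (lu_inv M a)). apply lu_iso2.
  rewrite <- !lu_nat, H. reflexivity.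
Qed.

Lemma kelly_r (a b : V) : (idn a ⊗ ru M b) ∘ asc M a b I = ru M (tns M a b).
Proof.
  apply cancel_tI. symmetry.
  apply (cancel_l (asc M a b I) (asc_inv M a b I)). apply asc_iso1.
  rewrite <- (triangle M (tns M a b) I), <- (tnsh_id M a b). norm.
  rewrite asc_nat. lrw (pentagon M a b I I).
  rewrite <- (tnsh_cmp M (idn a) (idn a)), cmp_idl, triangle.
  rewrite <- asc_nat, tcl. norm. reflexivity.
Qed.

Lemma lu_ru_I : lu M I = ru M I.
Proof.
  assert (E1 : ru M (tns M I I) = ru M I ⊗ idn I).
  { apply (cancel_l (ru M I) (ru_inv M I)). apply ru_iso1.
    rewrite ru_nat. reflexivity. }
  assert (E2 : lu M (tns M I I) = idn I ⊗ lu M I).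
  { apply (cancel_l (lu M I) (lu_inv M I)). apply lu_iso1.
    rewrite lu_nat. reflexivity. }
  apply cancel_It.
  apply (cancel_r (asc M I I I) (asc_inv M I I I)). apply asc_iso2.
  rewrite kelly_r, triangle. symmetry; exact E1.
Qed.
Lemma lu_ru_inv_I : lu_inv M I = ru_inv M I.
Proof.
  apply (cancel_l (lu M I) (lu_inv M I)). apply lu_iso1.
  rewrite lu_iso2, lu_ru_I, ru_iso2. reflexivity.
Qed.
End Mon.

Section VC.
Context {V : Category} {M : ClosedSymMonoidal V} (B : VCategory M).
Local Notation "f ⊗ g" := (tnsh M f g) (at level 35).
Local Notation I := (unt M).

Lemma coh_lr (X : V) :
  asc M I X I ∘ (lu_inv M X ⊗ idn I) ∘ ru_inv M X = (idn I ⊗ ru_inv M X) ∘ lu_inv M X.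
Proof.
  apply (cancel_l (idn I ⊗ ru M X) (idn I ⊗ ru_inv M X)). apply tid_iso_r, ru_iso1.
  norm. rewrite <- tcr, ru_iso2, tnsh_id, cmp_idl.
  rewrite kelly_r. lrw (ru_nat M (lu_inv M X)). rewrite <- cmp_assoc, ru_iso2, cmp_idr.
  reflexivity.
Qed.

Lemma triangle_inv2 (a b : V) :
  asc M a I b ∘ (ru_inv M a ⊗ idn b) = idn a ⊗ lu_inv M b.
Proof.
  rewrite <- triangle_inv, cmp_assoc, asc_iso2, cmp_idl. reflexivity.
Qed.

Lemma vassoc_inv (a b c d : B) :
  vcomp B a b d ∘ (vcomp B b c d ⊗ idn _) ∘ asc_inv M _ _ _ = vcomp B a c d ∘ (idn _ ⊗ vcomp B a b c).
Proof.
  rewrite vassoc, <- cmp_assoc, asc_iso2, cmp_idr. reflexivity.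
Qed.

Lemma postc_el (A : B) {b1 b2 : B} (m : uhom B b1 b2) (f : uhom B A b1) :
  postc A m ∘ f = ucomp m f.
Proof.
  unfold postc, ucomp. rewrite <- cmp_assoc, <- lu_inv_nat. norm.
  rewrite <- (cmp_assoc _ (_ ⊗ idn _)), tl. reflexivity.
Qed.
Lemma prec_el {a1 a2 : B} (e : uhom B a1 a2) (C : B) (f : uhom B a2 C) :
  prec e C ∘ f = ucomp f e.
Proof.
  unfold prec, ucomp. rewrite <- cmp_assoc, <- ru_inv_nat. norm.
  rewrite <- (cmp_assoc _ (idn _ ⊗ _)), tr, lu_ru_inv_I. reflexivity.
Qed.
Lemma postc_id (A b : B) : postc A (vid B b) = idn _.
Proof. unfold postc. rewrite vunitl, lu_iso2. reflexivity. Qed.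
Lemma prec_id (a C : B) : prec (vid B a) C = idn _.
Proof. unfold prec. rewrite vunitr, ru_iso2. reflexivity. Qed.

Lemma postc_comp (A : B) {a b c : B} (g : uhom B b c) (f : uhom B a b) :
  postc A (ucomp g f) = postc A g ∘ postc A f.
Proof.
  unfold postc, ucomp. rewrite lu_ru_inv_I, !tcl. norm. rewrite <- triangle_inv.
  norm. lrw (eq_sym (asc_inv_nat M g f (idn (vhom B A a)))).
  lrw (vassoc_inv A a b c).
  lrw (eq_sym (lu_inv_nat M (vcomp B A a b))).
  lrw (tl M g (vcomp B A a b)). rewrite <- (tr M g (vcomp B A a b)). norm.
  lrw (eq_sym (lu_inv_nat M (f ⊗ idn (vhom B A a)))).
  lrw (tl M g (f ⊗ idn (vhom B A a))).
  lrw (lu_inv_nat M (lu_inv M (vhom B A a))). reflexivity.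
Qed.

Lemma ucomp_assoc {a b c d : B} (h : uhom B c d) (g : uhom B b c) (f : uhom B a b) :
  ucomp h (ucomp g f) = ucomp (ucomp h g) f.
Proof. rewrite <- (postc_el _ g f), <- (postc_el _ h), <- (postc_el _ (ucomp h g)), postc_comp, cmp_assoc. reflexivity. Qed.
Lemma ucomp_idl {a b : B} (f : uhom B a b) : ucomp (vid B b) f = f.
Proof. rewrite <- postc_el, postc_id, cmp_idl. reflexivity. Qed.
Lemma ucomp_idr {a b : B} (f : uhom B a b) : ucomp f (vid B a) = f.
Proof. rewrite <- prec_el, prec_id, cmp_idl. reflexivity. Qed.

Lemma prec_comp {a b c : B} (g : uhom B b c) (f : uhom B a b) (C : B) :
  prec (ucomp g f) C = prec f C ∘ prec g C.
Proof.
  unfold prec, ucomp. rewrite !tcr. norm.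
  lrw (eq_sym (ru_inv_nat M (vcomp B b c C))).
  lrw (eq_sym (ru_inv_nat M (idn (vhom B c C) ⊗ g))).
  lrw (tr M (vcomp B b c C) f). rewrite <- (tl M (vcomp B b c C) f). norm.
  lrw (tr M (idn (vhom B c C) ⊗ g) f).
  lrw (vassoc a b c C).
  lrw (asc_nat M (idn (vhom B c C)) g f).
  lrw (eq_sym (ru_inv_nat M (ru_inv M (vhom B c C)))).
  lrw (triangle_inv2 (vhom B c C) I). reflexivity.
Qed.

Lemma prec_postc {a1 a2 b1 b2 : B} (e : uhom B a1 a2) (m : uhom B b1 b2) :
  prec e b2 ∘ postc a2 m = postc a1 m ∘ prec e b1.
Proof.
  unfold prec, postc. norm.
  lrw (eq_sym (ru_inv_nat M (vcomp B a2 b1 b2))).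
  lrw (tr M (vcomp B a2 b1 b2) e). rewrite <- (tl M (vcomp B a2 b1 b2) e). norm.
  lrw (vassoc a1 a2 b1 b2).
  rewrite <- (tnsh_id M (vhom B b1 b2) (vhom B a2 b1)).
  lrw (asc_nat M (idn (vhom B b1 b2)) (idn (vhom B a2 b1)) e).
  lrw (eq_sym (ru_inv_nat M (m ⊗ idn (vhom B a2 b1)))).
  lrw (asc_nat M m (idn (vhom B a2 b1)) (idn I)).
  lrw (eq_sym (ru_inv_nat M (lu_inv M (vhom B a2 b1)))).
  lrw (coh_lr (vhom B a2 b1)).
  lrw (eq_sym (lu_inv_nat M (vcomp B a1 a2 b1))).
  lrw (tl M m (vcomp B a1 a2 b1)). rewrite <- (tr M m (vcomp B a1 a2 b1)). norm.
  lrw (eq_sym (lu_inv_nat M (idn (vhom B a2 b1) ⊗ e))).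
  lrw (eq_sym (lu_inv_nat M (ru_inv M (vhom B a2 b1)))).
  rewrite (tnsh_id M (vhom B a2 b1) I).
  lrw (tr M m (idn (vhom B a2 b1) ⊗ e)). lrw (tl M m (idn (vhom B a2 b1) ⊗ e)).
  reflexivity.
Qed.
End VC.

Theorem proposition6p5 (V : Category) (M : ClosedSymMonoidal V)
  (B : VCategory M) :
  has_Vkernel_pairs B ->
  (forall (b1 b2 : B) (m : uhom B b1 b2),
      StrMonoV B b1 b2 m <-> rorth B (EpiV B) b1 b2 m) /\
  (has_Vcokernel_pairs B ->
   forall (a1 a2 : B) (e : uhom B a1 a2),
      EpiV B a1 a2 e <-> lorth B (StrMonoV B) a1 a2 e).
Proof.
  intros HK. split.
  - intros b1 b2 m. split; [intros [H _]; exact H |]. intros Hr. split; [exact Hr|].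
    destruct (HK b1 b2 m) as (k & p1 & p2 & [[Hc Hu] Hpb]).
    destruct (Hu b1 (vid B b1) (vid B b1) eq_refl) as (δ & [Hd1 Hd2] & _).
    assert (Ep1 : EpiV B k b1 p1).
    { intros C x y z Hxy. apply (cancel_l (prec p1 C) (prec δ C)).
      rewrite <- prec_comp, Hd1, prec_id; reflexivity. exact Hxy. }
    destruct (Hr k b1 p1 Ep1) as [_ Hpb2].
    destruct (Hpb2 (unt M) p2 m) as (d & [Hd3 Hd4] & _).
    { rewrite postc_el, prec_el; symmetry; exact Hc. }
    rewrite prec_el in Hd3.
    assert (Hdv : d = vid B b1).
    { transitivity (ucomp d (ucomp p1 δ)). rewrite Hd1, ucomp_idr; reflexivity.
      rewrite ucomp_assoc, Hd3, Hd2; reflexivity. }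
    assert (Heq : p1 = p2).
    { rewrite <- Hd3, Hdv, ucomp_idl. reflexivity. }
    intros A x u v Huv. destruct (Hpb A) as [_ H].
    destruct (H x u v Huv) as (w & [Hw1 Hw2] & _).
    rewrite <- Hw1, <- Hw2, Heq. reflexivity.
  - intros HC a1 a2 e. split.
    + intros He b1 b2 m [Hm _]. exact (Hm a1 a2 e He).
    + intros Hl. destruct (HC a1 a2 e) as (q & i1 & i2 & [[Hc Hu] Hpb]).
      destruct (Hu a2 (vid B a2) (vid B a2) eq_refl) as (n & [Hn1 Hn2] & _).
      assert (Si1 : StrMonoV B a2 q i1).
      { split.
        - intros c1 c2 e' He'. split. symmetry; apply prec_postc.
          intros T u v Huv. exists (postc c2 n ∘ v). split. split.
          + rewrite cmp_assoc, prec_postc, <- cmp_assoc, <- Huv, cmp_assoc,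
              <- postc_comp, Hn1, postc_id, cmp_idl. reflexivity.
          + apply (He' q). norm. rewrite prec_postc.
            rewrite <- (cmp_assoc (postc c1 i1)), prec_postc. norm.
            rewrite <- (cmp_assoc _ (prec e' q) v), <- Huv. norm.
            rewrite <- (cmp_assoc (postc c1 i1) (postc c1 n) (postc c1 i1)), <- postc_comp,
              Hn1, postc_id, cmp_idr. reflexivity.
          + intros w' [Hw1 Hw2]. rewrite <- Hw2, cmp_assoc, <- postc_comp, Hn1, postc_id, cmp_idl.
            reflexivity.
        - intros A x u v H. apply (cancel_l (postc A i1) (postc A n)).
          rewrite <- postc_comp, Hn1, postc_id; reflexivity. exact H. }
      destruct (Hl a2 q i1 Si1) as [_ Hpb2].
      destruct (Hpb2 (unt M) e i2) as (d & [Hd1 Hd2] & _).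
      { rewrite postc_el, prec_el; exact Hc. }
      rewrite postc_el in Hd2.
      assert (Hdv : d = vid B a2).
      { transitivity (ucomp (ucomp n i1) d). rewrite Hn1, ucomp_idl; reflexivity.
        rewrite <- ucomp_assoc, Hd2, Hn2; reflexivity. }
      assert (Heq : i1 = i2).
      { rewrite <- Hd2, Hdv, ucomp_idr. reflexivity. }
      intros C x u v H. destruct (Hpb C) as [_ P].
      destruct (P x u v H) as (w & [W1 W2] & _).
      rewrite <- W1, <- W2, Heq. reflexivity.
Qed.
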